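(* Let $\Omega\subset\mathbb{R}^n$ ($n\ge2$) be open, $\alpha\in[0,n]$ and $\mathcal{G}\in L^1(\Omega;\mathbb{R}^+)$. Suppose that for some $\lambda,\varrho>0$ and $\xi\in\Omega$ there is a point $z\in\Omega_\varrho(\xi)$ with $\mathbf{M}_\alpha\mathcal{G}(z)\le\lambda$. Then for all $\sigma>3^n$, $$d^\alpha_{\mathcal{G}}(\Omega_\varrho(\xi);\sigma\lambda)\le d^\alpha_{\chi_{B_{2\varrho}(\xi)}\mathcal{G}}(\Omega_\varrho(\xi);\sigma\lambda).$$
   Context: Functions on $\Omega$ are extended by zero outside $\Omega$. $B_\rho(x)$ is the open ball, $\Omega_\rho(x)=B_\rho(x)\cap\Omega$, $\chi_E$ the indicator of $E$. $\mathbf{M}_\alpha f(x)=\sup_{\rho>0}\rho^\alpha\fint_{B_\rho(x)}|f|$ and $d^\alpha_{h}(E;\lambda)=\mathcal{L}^n(\{x\in E:\mathbf{M}_\alpha h(x)>\lambda\})$. *)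

(* Defs.v *)
From HB Require Import structures.
From mathcomp Require Import all_boot all_order all_algebra.
From mathcomp Require Import all_classical all_reals all_analysis.
Set Implicit Arguments. Unset Strict Implicit. Unset Printing Implicit Defensive.
Import Order.TTheory GRing.Theory Num.Theory.
Import numFieldNormedType.Exports.
Local Open Scope classical_set_scope.
Local Open Scope ring_scope.

(* R^n is modelled as row vectors 'rV[R]_n ; coordinates x ord0 i. *)

Definition enorm (R : realType) (n : nat) (x : 'rV[R]_n) : R :=
  Num.sqrt (\sum_(i < n) (x ord0 i) ^+ 2).

Definition eball (R : realType) (n : nat) (x : 'rV[R]_n) (rho : R) : set 'rV[R]_n :=
  [set y | enorm (y - x) < rho].

Definition oball (R : realType) (n : nat) (Om : set 'rV[R]_n) (x : 'rV[R]_n) (rho : R)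
  : set 'rV[R]_n := eball x rho `&` Om.

Definition box (R : realType) (n : nat) (a b : 'rV[R]_n) : set 'rV[R]_n :=
  [set x | forall i : 'I_n, a ord0 i <= x ord0 i < b ord0 i].

Definition boxvol (R : realType) (n : nat) (a b : 'rV[R]_n) : R :=
  \prod_(i < n) Num.max (b ord0 i - a ord0 i) 0.

(* n-dimensional Lebesgue (outer) measure L^n: infimum of total volumes of
   countable covers by boxes.  On Lebesgue measurable sets this is the
   Lebesgue measure. *)
Definition leb (R : realType) (n : nat) (E : set 'rV[R]_n) : \bar R :=
  ereal_inf [set (\sum_(k <oo) ((boxvol (ab k).1 (ab k).2)%:E))%E
            | ab in [set ab : nat -> 'rV[R]_n * 'rV[R]_n |
                      E `<=` \bigcup_k box (ab k).1 (ab k).2]].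

Definition leb_measurable (R : realType) (n : nat) (A : set 'rV[R]_n) : Prop :=
  caratheodory_measurable (@leb R n) A.

Definition leb_measurable_fun (R : realType) (n : nat) (f : 'rV[R]_n -> R) : Prop :=
  forall t : R, leb_measurable [set x | t < f x].

(* Lebesgue integral over E of a nonnegative function g, via the layer-cake
   (Cavalieri) formula  int_E g dL^n = int_0^oo L^n({x in E : g x > t}) dt. *)
Definition lint (R : realType) (n : nat) (E : set 'rV[R]_n) (g : 'rV[R]_n -> R) : \bar R :=
  (\int[@lebesgue_measure R]_(t in `]0%R, +oo[%classic)
      leb [set x | E x /\ (t < g x)%R])%E.

(* G in L^1(Omega; R^+), G being extended by zero outside Omega. *)
Definition L1_nonneg (R : realType) (n : nat) (Om : set 'rV[R]_n) (G : 'rV[R]_n -> R) : Prop :=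
  [/\ forall x, Om x -> (0 <= G x)%R,
      forall x, ~ Om x -> G x = 0%R,
      leb_measurable_fun G
    & (lint Om (fun x => `|G x|%R) < +oo)%E].

Definition ball_avg (R : realType) (n : nat) (f : 'rV[R]_n -> R) (x : 'rV[R]_n) (rho : R)
  : \bar R :=
  (lint (eball x rho) (fun y => `|f y|%R) * ((fine (leb (eball x rho)))^-1)%:E)%E.

Definition Mfrac (R : realType) (n : nat) (alpha : R) (f : 'rV[R]_n -> R) (x : 'rV[R]_n)
  : \bar R :=
  ereal_sup [set ((rho `^ alpha)%:E * ball_avg f x rho)%E | rho in [set rho : R | 0 < rho]].

Definition dfun (R : realType) (n : nat) (alpha : R) (h : 'rV[R]_n -> R)
  (E : set 'rV[R]_n) (lam : R) : \bar R :=
  leb [set x | E x /\ (lam%:E < Mfrac alpha h x)%E].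

(* Main.v *)
Require Import Defs.
From HB Require Import structures.
From mathcomp Require Import all_boot all_order all_algebra.
From mathcomp Require Import all_classical all_reals all_analysis.
From mathcomp Require Import ring lra.
Import Order.TTheory GRing.Theory Num.Theory.
Import numFieldNormedType.Exports.
Local Open Scope classical_set_scope.
Local Open Scope ring_scope.
Section Enorm.
Variables (R : realType) (n : nat).
Implicit Types u v : 'rV[R]_n.

Lemma enorm_ge0 u : 0 <= enorm u.
Proof. exact: sqrtr_ge0. Qed.

Lemma sumsq_ge0 u : 0 <= \sum_(i < n) u ord0 i ^+ 2.
Proof. by apply: sumr_ge0 => i _; exact: sqr_ge0. Qed.

Lemma enorm_sq u : enorm u ^+ 2 = \sum_(i < n) u ord0 i ^+ 2.
Proof. by rewrite /enorm sqr_sqrtr // sumsq_ge0. Qed.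

Lemma enormZ c u : enorm (c *: u) = `|c| * enorm u.
Proof.
rewrite /enorm; under eq_bigr do rewrite mxE exprMn.
by rewrite -mulr_sumr sqrtrM ?sqrtr_sqr // sqr_ge0.
Qed.

Lemma enormN u : enorm (- u) = enorm u.
Proof. by rewrite -scaleN1r enormZ normrN normr1 mul1r. Qed.

Lemma cs u v : \sum_(i < n) u ord0 i * v ord0 i <= enorm u * enorm v.
Proof.
have [A0|Apos] := eqVneq (enorm u) 0.
  have : \sum_(i < n) u ord0 i ^+ 2 == 0 by rewrite -enorm_sq A0 expr0n.
  move/eqP => E0; have H := psumr_eq0P (fun i _ => sqr_ge0 _) E0.
  rewrite A0 mul0r big1 // => i _.
  have : u ord0 i ^+ 2 = 0 by apply: H.
  by move/eqP; rewrite sqrf_eq0 => /eqP ->; rewrite mul0r.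
have [B0|Bpos] := eqVneq (enorm v) 0.
  have : \sum_(i < n) v ord0 i ^+ 2 == 0 by rewrite -enorm_sq B0 expr0n.
  move/eqP => E0; have H := psumr_eq0P (fun i _ => sqr_ge0 _) E0.
  rewrite B0 mulr0 big1 // => i _.
  have : v ord0 i ^+ 2 = 0 by apply: H.
  by move/eqP; rewrite sqrf_eq0 => /eqP ->; rewrite mulr0.
set A := enorm u; set B := enorm v.
have Ag : 0 < A by rewrite lt0r Apos enorm_ge0.
have Bg : 0 < B by rewrite lt0r Bpos enorm_ge0.
have key : (2 * A * B) * \sum_(i < n) u ord0 i * v ord0 i <= (2 * A * B) * (A * B).
  rewrite mulr_sumr.
  have -> : (2 * A * B) * (A * B) = \sum_(i < n) (u ord0 i ^+ 2 * B ^+ 2 + v ord0 i ^+ 2 * A ^+ 2).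
    rewrite big_split /= -!mulr_suml -!enorm_sq -/A -/B; ring.
  apply: ler_sum => i _.
  have := sqr_ge0 (u ord0 i * B - v ord0 i * A).
  nra.
rewrite ler_pM2l // in key.
by rewrite !mulr_gt0.
Qed.

Lemma enormD u v : enorm (u + v) <= enorm u + enorm v.
Proof.
rewrite -(ger0_norm (enorm_ge0 (u + v))) -(ger0_norm (addr_ge0 (enorm_ge0 u) (enorm_ge0 v))).
rewrite -ler_sqr ?nnegrE ?normr_ge0 //.
rewrite !real_normK ?num_real // enorm_sq sqrrD !enorm_sq.
have -> : \sum_(i < n) (u + v) ord0 i ^+ 2 =
  \sum_(i < n) u ord0 i ^+ 2 + 2 * \sum_(i < n) u ord0 i * v ord0 i + \sum_(i < n) v ord0 i ^+ 2.
  rewrite mulr_sumr -!big_split /=; apply: eq_bigr => i _; rewrite mxE; ring.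
have := cs u v; lra.
Qed.
End Enorm.
Section Leb.
Variables (R : realType) (n : nat).
Local Open Scope ereal_scope.

Lemma boxvol_ge0 (a b : 'rV[R]_n) : (0 <= boxvol a b)%R.
Proof. by apply: prodr_ge0 => i _; rewrite le_max lexx orbT. Qed.

Lemma leb_ge0 (E : set 'rV[R]_n) : 0 <= leb E.
Proof.
apply: le_ereal_inf_tmp => _ [ab _ <-].
by apply: nneseries_ge0 => k _ _; rewrite lee_fin boxvol_ge0.
Qed.

Lemma leb_le (A B : set 'rV[R]_n) : A `<=` B -> leb A <= leb B.
Proof.
move=> AB; apply: ereal_inf_le_tmp => _ [ab Hab <-].
by exists ab => //= y /AB /Hab.
Qed.

Lemma boxvol_dil (x z a b : 'rV[R]_n) (c : R) : (0 < c)%R ->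
  boxvol (z + c *: (a - x)) (z + c *: (b - x)) = (c ^+ n * boxvol a b)%R.
Proof.
move=> c0; rewrite /boxvol.
have -> : (c ^+ n = \prod_(i < n) c)%R by rewrite prodr_const card_ord.
rewrite -big_split /=; apply: eq_bigr => i _; rewrite !mxE.
have -> : (z ord0 i + c * (b ord0 i - x ord0 i) - (z ord0 i + c * (a ord0 i - x ord0 i))
   = c * (b ord0 i - a ord0 i))%R by ring.
by rewrite maxr_pMr ?ltW // mulr0.
Qed.

Lemma leb_dil (x z : 'rV[R]_n) (r c : R) : (0 < c)%R ->
  leb (eball z (c * r)) <= (c ^+ n)%:E * leb (eball x r).
Proof.
move=> c0.
have cn0 : (0 < c ^+ n)%R by rewrite exprn_gt0.
suff H : ((c ^+ n)^-1)%:E * leb (eball z (c * r)) <= leb (eball x r).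
  rewrite -(lee_pmul2l (x := ((c ^+ n)^-1)%:E)) ?fin_numE ?lte_fin ?invr_gt0 //.
  by rewrite muleA -EFinM mulVf ?gt_eqF // mul1e.
apply: le_ereal_inf_tmp => _ [ab Hcov <-].
pose ab' k := ((z + c *: ((ab k).1 - x))%R, (z + c *: ((ab k).2 - x))%R).
have H1 : leb (eball z (c * r)) <= \sum_(k <oo) (boxvol (ab' k).1 (ab' k).2)%:E.
  apply: ereal_inf_lbound; exists ab' => //.
  move=> y Hy.
  pose y' := (x + c^-1 *: (y - z))%R.
  have : eball x r y'.
    rewrite /eball /= /y' addrAC subrr add0r enormZ gtr0_norm ?invr_gt0 //.
    by rewrite ltr_pdivrMl // mulrC; move: Hy; rewrite /eball /= mulrC.
  move=> /Hcov [k _ Hk]; exists k => //= i.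
  have := Hk i; rewrite /y' !mxE => /andP[h1 h2].
  have e : (y ord0 i = z ord0 i + c * (x ord0 i + c^-1 * (y ord0 i - z ord0 i) - x ord0 i))%R.
    by field; rewrite gt_eqF.
  rewrite e; apply/andP; split.
    by rewrite lerD2l ler_pM2l // lerD2r.
  by rewrite ltrD2l ltr_pM2l // ltrD2r.
have H2 : \sum_(k <oo) (boxvol (ab' k).1 (ab' k).2)%:E =
          (c ^+ n)%:E * \sum_(k <oo) (boxvol (ab k).1 (ab k).2)%:E.
  rewrite -nneseriesZl; last by move=> k _; rewrite lee_fin boxvol_ge0.
  by apply: eq_eseriesr => k _; rewrite /ab' /= boxvol_dil.
rewrite H2 in H1.
by rewrite -(lee_pmul2l (x := (c ^+ n)%:E)) ?fin_numE ?lte_fin // muleA -EFinM divff ?gt_eqF // mul1e.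
Qed.
End Leb.
Section Lint.
Variables (R : realType) (n : nat).
Local Open Scope ereal_scope.

Lemma lint_ge0 (E : set 'rV[R]_n) g : 0 <= lint E g.
Proof. by apply: integral_ge0 => t _; exact: leb_ge0. Qed.

Lemma lint_le (E E' : set 'rV[R]_n) g g' :
  (forall t : R, (0 < t)%R -> [set x | E x /\ (t < g x)%R] `<=` [set x | E' x /\ (t < g' x)%R]) ->
  lint E g <= lint E' g'.
Proof.
move=> H; rewrite /lint !ge0_integralE; try by move=> t _; exact: leb_ge0.
apply: ereal_sup_le => _ [h Hh <-]; exists h => //= t.
apply: (le_trans (Hh t)); rewrite /patch; case: ifP => // /set_mem /= Ht.
apply: leb_le; apply: H.
by move: Ht; rewrite in_itv /= andbT.
Qed.
End Lint.
Arguments enormD {R n}.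
Arguments enormN {R n}.
Arguments enormZ {R n}.
Arguments leb_le {R n}.
Arguments leb_ge0 {R n}.
Arguments leb_dil {R n}.
Arguments lint_le {R n}.
Arguments lint_ge0 {R n}.
Theorem mainTheorem6 (R : realType) (n : nat) (Om : set 'rV[R]_n)
  (alpha : R) (G : 'rV[R]_n -> R) (lam rho : R) (xi z : 'rV[R]_n) :
  (2 <= n)%N ->
  open Om ->
  0 <= alpha <= n%:R ->
  L1_nonneg Om G ->
  0 < lam -> 0 < rho -> Om xi ->
  oball Om xi rho z ->
  (Mfrac alpha G z <= lam%:E)%E ->
  forall sigma : R, (3 ^+ n)%:R < sigma ->
    (dfun alpha G (oball Om xi rho) (sigma * lam)
     <= dfun alpha (fun x => (\1_(eball xi (2 * rho)) x * G x)%R)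
             (oball Om xi rho) (sigma * lam))%E.
Proof.
move=> _ _ /andP[a0 _] [Gnn Gout _ Gint] lam0 rho0 _ [zxi _] HMz sigma Hsig.
have e3 : ((3 ^+ n)%:R = (3 : R) ^+ n) by rewrite natrX.
rewrite e3 in Hsig.
apply: leb_le => x [[Hx Om_x] Hlt]; split; first by split.
have [_ [r /= r0 <-] Hr] := ereal_sup_gt Hlt.
have rr : r < rho.
  rewrite ltNge; apply/negP => rhor.
  set A := lint (eball x r) (fun y => `|G y|).
  set A' := lint (eball z (3 * r)) (fun y => `|G y|).
  set V := leb (eball x r).
  set V' := leb (eball z (3 * r)).
  have sub : eball x r `<=` eball z (3 * r).
    move=> y; rewrite /eball /= => Hy.
    have -> : y - z = (y - x) + ((x - xi) + - (z - xi)) by rewrite opprB !addrA addrNK addrNK.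
    apply: (le_lt_trans (enormD _ _)).
    apply: (le_lt_trans (lerD (lexx _) (enormD _ _))); rewrite enormN.
    move: zxi Hx; rewrite /eball /= => h1 h2; lra.
  have AA' : (A <= A')%E.
    by apply: lint_le => t _ y [Hy Ht]; split => //; exact: sub.
  have A'fin : (A' < +oo)%E.
    apply: (le_lt_trans _ Gint); apply: lint_le => t t0 y [Hy Ht]; split => //.
    have [//|nOy] := pselect (Om y).
    by move: Ht; rewrite Gout // normr0 ltNge ltW.
  have A0 : (0 <= A)%E by exact: lint_ge0.
  have hyp2 : ((((3 * r) `^ alpha)%:E * (A' * ((fine V')^-1)%:E)) <= lam%:E)%E.
    apply: le_trans HMz; apply: ereal_sup_ubound; exists (3 * r) => //=.
    by rewrite mulr_gt0.
  have v0 : fine V != 0.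
    apply/negP => /eqP e; move: Hr; rewrite /ball_avg -/A -/V e invr0 !mule0.
    by rewrite lte_fin ltNge ltW // mulr_gt0 // (lt_trans _ Hsig) // exprn_gt0.
  have V0 : (0 <= V)%E by exact: leb_ge0.
  have Vfin : V = (fine V)%:E.
    by move: v0 V0; case: (V) => //=; rewrite eqxx.
  have v0' : 0 < fine V by rewrite lt0r v0 -lee_fin -Vfin.
  have VV' : (V <= V')%E by exact: leb_le.
  have V'le : (V' <= (3 ^+ n)%:E * V)%E by exact: leb_dil.
  have V'fin : V' = (fine V')%:E.
    move: V'le VV'; rewrite Vfin -EFinM; case: (V') => //=.
  set v := fine V in v0 v0' Vfin * .
  set v' := fine V' in V'fin * .
  rewrite Vfin V'fin !lee_fin in VV' V'le.
  have A'fin' : A' = (fine A')%:E.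
    by move: A'fin (le_trans A0 AA'); case: (A').
  have Afin' : A = (fine A)%:E.
    by move: A'fin AA' A0; rewrite A'fin'; case: (A') => //; case: (A).
  move: Hr hyp2 AA'; rewrite /ball_avg -/A -/V Vfin Afin' A'fin' /= -!EFinM !lte_fin !lee_fin -/v'.
  set a := fine A; set a' := fine A'.
  have a0' : 0 <= a by rewrite -lee_fin -Afin'.
  have c0 : 0 < r `^ alpha by rewrite powR_gt0.
  have cc : r `^ alpha <= (3 * r) `^ alpha.
    by apply: ge0_ler_powR => //; rewrite ?nnegrE ?mulr_ge0 ?ltW //; lra.
  have pp : v^-1 <= 3 ^+ n * v'^-1.
    rewrite -(ler_pM2l (x := v * v')) ?mulr_gt0 //; last by lra.
    have v'0 : v' != 0 by apply/negP => /eqP e; rewrite e in VV'; lra.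
    have -> : v * v' * v^-1 = v' by field.
    have -> : v * v' * (3 ^+ n * v'^-1) = 3 ^+ n * v by field.
    exact: V'le.
  move=> h1 h2 h3.
  have h4 : r `^ alpha * (a * v^-1) <= (3 * r) `^ alpha * (a' * (3 ^+ n * v'^-1)).
    apply: ler_pM => //; first by rewrite ltW.
      by rewrite mulr_ge0 // invr_ge0 ltW.
    apply: ler_pM => //; by rewrite invr_ge0 ltW.
  have h5 : (3 * r) `^ alpha * (a' * (3 ^+ n * v'^-1)) = 3 ^+ n * ((3 * r) `^ alpha * (a' * v'^-1)).
    by ring.
  have h6 : (3 : R) ^+ n * lam < sigma * lam by rewrite ltr_pM2r.
  have h7 : (3 : R) ^+ n * ((3 * r) `^ alpha * (a' * v'^-1)) <= 3 ^+ n * lam.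
    by rewrite ler_pM2l // exprn_gt0.
  lra.
have sub2 : eball x r `<=` eball xi (2 * rho).
  move=> y; rewrite /eball /= => Hy.
  have -> : y - xi = (y - x) + (x - xi) by rewrite addrA addrNK.
  apply: (le_lt_trans (enormD _ _)); move: Hx; rewrite /eball /= => h; lra.
apply: (lt_le_trans Hr); apply: ereal_sup_ubound; exists r => //=.
congr (_ * _)%E; rewrite /ball_avg; congr (_ * _)%E.
rewrite /lint; congr (integral _ _ _); apply/funext => t; congr leb.
apply/seteqP; split => y [Hy Ht]; split => //.
  have Ey : eball xi (2 * rho) y by exact: sub2.
  by move: Ht => /=; rewrite indicE mem_set // mul1r.
have Ey : eball xi (2 * rho) y by exact: sub2.
by rewrite /= indicE mem_set // mul1r.
Qed.
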